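(* Consider a two-player perfect-information game of depth $D$, with notation as in the context. Let $\{\tilde U_s\}_{s\in\mathcal S}$ be learned EPFs and $\tilde\pi$ the strategy they induce. Suppose $L_\infty(\tilde U_s,\tilde U^{\mathrm{target}}_s)\le\epsilon$ for all $s\in\mathcal S$. Let $\pi^*$ be an optimal SEFCE. Then $|R_1(\tilde\pi)-R_1(\pi^* )|=\mathcal O(D\epsilon)$, i.e. it is at most $C D\epsilon$ for an absolute constant $C$ that does not depend on the game, on $\epsilon$ or on the learned EPFs.
   Context: A two-player perfect-information game is a finite rooted tree whose vertices are the states $s\in\mathcal S$. The leaves $\mathcal L$ carry payoffs $r_1(\ell),r_2(\ell)\in\mathbb R$ for the leader $\mathsf P_1$ and the follower $\mathsf P_2$. Each non-leaf state belongs to exactly one of $\mathcal S_1$ (leader) or $\mathcal S_2$ (follower). $\mathcal C(s)$ is the set of children of $s$, and $T(a;s)$ is the child reached by action $a$. The depth $D$ is the maximum number of edges on a root-to-leaf path. Define $\underline V,\overline V$ by backward induction: - for a leaf: $\underline V(\ell)=\overline V(\ell)=r_2(\ell)$; - $\underline V(s)=\min_{s'\in\mathcal C(s)}\underline V(s')$ for $s\in\mathcal S_1$; - $\underline V(s)=\max_{s'\in\mathcal C(s)}\underline V(s')$ for $s\in\mathcal S_2$; - $\overline V(s)=\max_{s'\in\mathcal C(s)}\overline V(s')$ for every non-leaf $s$. For $s\in\mathcal S_2$ and $s'\in\mathcal C(s)$, let $\tau(s')=\max_{s^!\in\mathcal C(s),s^!\ne s'}\underline V(s^!)$. Let $\beta(s')=\tau(s')$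 if the parent of $s'$ is in $\mathcal S_2$, and $\beta(s')=-\infty$ if it is in $\mathcal S_1$. For $g:\mathbb R\to\mathbb R\cup\{-\infty\}$: - $\bigwedge_i g_i$ is the upper concave envelope, i.e. the pointwise infimum of all concave $h\ge\max_i g_i$; - $[g\triangleright t](\mu)=g(\mu)$ if $\mu\ge t$ and $-\infty$ otherwise. Exact EPFs: $U_\ell(\mu)=r_1(\ell)$ if $\mu=r_2(\ell)$ and $-\infty$ otherwise; $U_s=\bigwedge_{s'\in\mathcal C(s)}(U_{s'}\triangleright\beta(s'))$ for non-leaf $s$. Learned EPFs: $\tilde U_\ell=U_\ell$ for leaves. For each non-leaf $s$, $\tilde U_s$ is a piecewise linear function, the linear interpolation of finitely many points with $x$-coordinates in $[\underline V(s),\overline V(s)]$ including both endpoints. It is real-valued on that interval and $-\infty$ outside. The target is $\tilde U^{\mathrm{target}}_s=\bigwedge_{s'\in\mathcal C(s)}(\tilde U_{s'}\triangleright\beta(s'))$ for non-leaf $s$, and $\tilde U^{\mathrm{target}}_\ell=\tilde U_\ell$ for leaves. The loss is $L_\infty(f,g)=\sup_{\mu\in\mathbb R}|f(\mu)-g(\mu)|$, with the convention $|(-\infty)-(-\infty)|=0$. Induced strategy $\tilde\pi$: start at the root with promise $\mu_{\mathrm{root}}\in\arg\max\tilde U_{\mathrm{root}}$. At a non-leaf $s$ with promise $\mu$, pick a maximizer $(s',s'',t,\mu',\mu'')$, over $s',s''\in\mathcal C(s)$, $t\in[0,1]$ with $t\mu'+(1-t)\mu''=\mu$, of $t[\tilde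 U_{s'}\triangleright\beta(s')](\mu')+(1-t)[\tilde U_{s''}\triangleright\beta(s'')](\mu'')$. Move to $s'$ with probability $t$ and promise $\mu'$, and to $s''$ with probability $1-t$ and promise $\mu''$. At follower states this is a recommendation that the follower follows. $R_1(\tilde\pi)$ is the leader's expected leaf payoff under this play. SEFCE: a (possibly recommendation-/history-dependent) joint strategy $\pi$ of leader and follower is a Stackelberg extensive-form correlated equilibrium if, for every follower state $s$ and action $a$ recommended with positive probability, the follower's expected payoff from $T(a;s)$ onward under $\pi$ is at least $\tau(T(a;s))$. The payoff threshold reflects that deviations are punished by the leader's grim strategy. An SEFCE is optimal if it maximizes the leader's expected payoff $R_1(\pi)$. *)

(* Defs.v *)
From HB Require Import structures.
From mathcomp Require Import all_boot all_order all_algebra.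
From mathcomp Require Import all_classical all_reals ereal.
Set Implicit Arguments. Unset Strict Implicit. Unset Printing Implicit Defensive.
Import Order.TTheory GRing.Theory Num.Theory.
Local Open Scope ring_scope.
Local Open Scope classical_set_scope.

(* States form a finite type; [kids s] lists the children of s (one per
   action, T(a;s)); [leader s] = true iff s is in S_1 (leader state),
   false iff s is in S_2 (follower state); the flag is only meaningful at
   non-leaf states.  r1, r2 are the leaf payoffs. *)
Record game (R : realType) := Game {
  St : finType;
  groot : St;
  kids : St -> seq St;
  leader : St -> bool;
  r1 : St -> R;
  r2 : St -> R }.

Section Game.
Variable R : realType.
Variable G : game R.
Local Notation S := (St G).

Definition is_leaf (s : S) : bool := kids s == [::].
Definition edge : rel S := fun x y => y \in kids x.

Definition wf_game : Prop :=
  [/\ forall s : S, uniq (kids s),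
      forall x : S, groot G \notin kids x,
      forall s : S, s != groot G -> #|[pred x : S | s \in kids x]| = 1
    & forall s : S, connect edge (groot G) s].

(* All recursions below are by backward induction, implemented with fuel
   #|S|, which exceeds the height of any state of a well-formed tree. *)
Definition fuel : nat := #|S|.

Fixpoint height_n (n : nat) (s : S) : nat :=
  match n with
  | 0 => 0
  | n'.+1 => \max_(c <- kids s) (height_n n' c).+1
  end.

(* depth D = max number of edges on a root-to-leaf path *)
Definition depth : nat := height_n fuel (groot G).

Fixpoint vlow_n (n : nat) (s : S) : R :=
  match n with
  | 0 => r2 s
  | n'.+1 =>
    match kids s with
    | [::] => r2 s
    | c :: cs =>
      if leader s
      then foldr (fun x a => Num.min (vlow_n n' x) a) (vlow_n n' c) cs
      else foldr (fun x a => Num.max (vlow_n n' x) a) (vlow_n n' c) cs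
    end
  end.

Fixpoint vup_n (n : nat) (s : S) : R :=
  match n with
  | 0 => r2 s
  | n'.+1 =>
    match kids s with
    | [::] => r2 s
    | c :: cs => foldr (fun x a => Num.max (vup_n n' x) a) (vup_n n' c) cs
    end
  end.

Definition Vlow (s : S) : R := vlow_n fuel s.
Definition Vup (s : S) : R := vup_n fuel s.

Definition tau (s c : S) : \bar R :=
  (\big[maxe/-oo]_(x <- kids s | x != c) (Vlow x)%:E)%E.

Definition beta (s c : S) : \bar R := if leader s then -oo%E else tau s c.

End Game.

Section EPF.
Variable R : realType.

Definition trunc (g : R -> \bar R) (t : \bar R) : R -> \bar R :=
  fun mu => if (t <= mu%:E)%E then g mu else -oo%E.

Definition concave_ext (h : R -> \bar R) : Prop :=
  forall (x y a b t : R), (0 <= t <= 1)%R ->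
    (a%:E <= h x)%E -> (b%:E <= h y)%E ->
    (((t * a + (1 - t) * b)%R)%:E <= h (t * x + (1 - t) * y)%R)%E.

Definition env (I : Type) (P : I -> Prop) (g : I -> R -> \bar R)
  : R -> \bar R :=
  fun mu => ereal_inf [set h mu | h in
     [set h : R -> \bar R | concave_ext h /\
        forall i x, P i -> (g i x <= h x)%E]].

Definition leafEPF (a b : R) : R -> \bar R :=
  fun mu => if mu == b then a%:E else -oo%E.

Definition is_pl (a b : R) (f : R -> \bar R) : Prop :=
  exists xs ys : seq R,
  [/\ [/\ size xs = size ys, (0 < size xs)%N, sorted <%R xs,
      head 0 xs = a & last 0 xs = b],
      forall i, (i < size xs)%N -> f (nth 0 xs i) = (nth 0 ys i)%:E,
      forall i mu, (i.+1 < size xs)%N ->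
        nth 0 xs i <= mu <= nth 0 xs i.+1 ->
        f mu = (nth 0 ys i + (mu - nth 0 xs i) / (nth 0 xs i.+1 - nth 0 xs i)
                 * (nth 0 ys i.+1 - nth 0 ys i))%:E
    & forall mu, mu < a \/ b < mu -> f mu = -oo%E].

(* L_inf(f, g) <= eps, with |(-oo) - (-oo)| = 0 and any other mismatch
   of infinite values giving +oo *)
Definition loss_le (f g : R -> \bar R) (eps : R) : Prop :=
  forall mu, (f mu = -oo%E /\ g mu = -oo%E) \/
    exists a b : R, [/\ f mu = a%:E, g mu = b%:E & `|a - b| <= eps].

End EPF.

Section Learned.
Variable R : realType.
Variable G : game R.
Local Notation S := (St G).
Variable U : S -> R -> \bar R.

Definition learned : Prop :=
  forall s : S,
    if is_leaf s then forall mu, U s mu = leafEPF (r1 s) (r2 s) mu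
    else is_pl (Vlow s) (Vup s) (U s).

Definition target (s : S) : R -> \bar R :=
  if is_leaf s then U s
  else env (fun c => c \in kids s) (fun c => trunc (U c) (beta s c)).

(* a choice (s', s'', t, mu', mu'') *)
Definition choice := (S * S * R * R * R)%type.

Definition feasible (s : S) (mu : R) (ch : choice) : Prop :=
  let '(c1, c2, t, m1, m2) := ch in
  [/\ c1 \in kids s, c2 \in kids s, (0 <= t <= 1)%R
    & t * m1 + (1 - t) * m2 = mu].

Definition split_val (s : S) (ch : choice) : \bar R :=
  let '(c1, c2, t, m1, m2) := ch in
  (t%:E * trunc (U c1) (beta s c1) m1 + ((1 - t)%R)%:E * trunc (U c2) (beta s c2) m2)%E.

Definition induced_sel (sel : S -> R -> choice) : Prop :=
  forall s mu, ~~ is_leaf s ->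
    feasible s mu (sel s mu) /\
    forall ch, feasible s mu ch -> (split_val s ch <= split_val s (sel s mu))%E.

(* expected leader payoff when play starts at s with promise mu and follows
   the induced strategy (the follower follows recommendations) *)
Fixpoint ind_pay_n (sel : S -> R -> choice) (n : nat) (s : S) (mu : R) : R :=
  match n with
  | 0 => r1 s
  | n'.+1 =>
    if kids s is [::] then r1 s
    else let '(c1, c2, t, m1, m2) := sel s mu in
         t * ind_pay_n sel n' c1 m1 + (1 - t) * ind_pay_n sel n' c2 m2
  end.

Definition R1_induced (sel : S -> R -> choice) (mu0 : R) : R :=
  ind_pay_n sel (fuel G) (groot G) mu0.

End Learned.

Section SEFCE.
Variable R : realType.
Variable G : game R.
Local Notation S := (St G).
(* In a perfect-information tree histories are states, so a (possibly
   correlated, recommendation-dependent) joint strategy is described, as far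
   as the outcome distribution and all continuation payoffs are concerned,
   by the probability pi s c of moving from s to its child c. *)
Variable pi : S -> S -> R.

Definition is_joint : Prop :=
  forall s : S, ~~ is_leaf s ->
    (forall c, c \in kids s -> 0 <= pi s c) /\ \sum_(c <- kids s) pi s c = 1.

Fixpoint exp_n (f : S -> R) (n : nat) (s : S) : R :=
  match n with
  | 0 => f s
  | n'.+1 =>
    if kids s is [::] then f s
    else \sum_(c <- kids s) pi s c * exp_n f n' c
  end.

Fixpoint reach_n (n : nat) (s : S) : R :=
  match n with
  | 0 => if s == groot G then 1 else 0
  | n'.+1 => if s == groot G then 1
             else \sum_(x : S | s \in kids x) reach_n n' x * pi x s
  end.

Definition R1 : R := exp_n (@r1 _ G) (fuel G) (groot G).
Definition follower_payoff_from (c : S) : R := exp_n (@r2 _ G) (fuel G) c.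
Definition reach (s : S) : R := reach_n (fuel G) s.

Definition SEFCE : Prop :=
  is_joint /\
  forall s c, ~~ is_leaf s -> ~~ leader s -> c \in kids s ->
    0 < reach s * pi s c -> (tau s c <= (follower_payoff_from c)%:E)%E.

End SEFCE.

Definition optimal_SEFCE (R : realType) (G : game R) (pi : St G -> St G -> R) :=
  SEFCE pi /\ forall pi' : St G -> St G -> R, SEFCE pi' -> R1 pi' <= R1 pi.

(* Main.v *)
Require Import Defs.
From HB Require Import structures.
From mathcomp Require Import all_boot all_order all_algebra.
From mathcomp Require Import all_classical all_reals ereal.
From mathcomp Require Import ring lra zify.
Set Implicit Arguments. Unset Strict Implicit. Unset Printing Implicit Defensive.
Import Order.TTheory GRing.Theory Num.Theory.
Local Open Scope ring_scope.
Section Tree.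
Variable R : realType.
Variable G : game R.
Hypothesis wf : wf_game G.
Local Notation S := (St G).
Local Notation root := (groot G).

Definition par (s : S) : S := odflt s [pick x | s \in kids x].

Lemma root_notkid x : root \notin kids x.
Proof. by case: wf => _ h _ _; apply: h. Qed.

Lemma kid_neq_root x c : c \in kids x -> c != root.
Proof. by move=> h; apply/eqP=> e; move: (root_notkid x); rewrite -e h. Qed.

Lemma kid_par x c : c \in kids x -> par c = x.
Proof.
move=> cx; rewrite /par; case: pickP => [y cy|/(_ x)]; last by rewrite cx.
case: wf => _ _ h1 _; have := h1 c (kid_neq_root cx).
move=> h; have : (#|[pred x : S | c \in kids x]| <= 1)%N by rewrite h.
move/card_le1_eqP => H; apply: H; by rewrite inE.
Qed.

Lemma par_root : par root = root.
Proof. by rewrite /par; case: pickP => [y|//]; rewrite (negbTE (root_notkid y)). Qed.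

Lemma par_kid s : s != root -> s \in kids (par s).
Proof.
move=> sr; rewrite /par; case: pickP => [y //|h].
case: wf => _ _ h1 _; have := h1 s sr.
by rewrite eq_card0 // => x; rewrite !inE h.
Qed.

Lemma kidsE s x : s != root -> (s \in kids x) = (x == par s).
Proof.
move=> sr; apply/idP/eqP => [/kid_par -> //|->]; exact: par_kid.
Qed.

Lemma iter_root_ex s : exists n, iter n par s == root.
Proof.
case: wf => _ _ _ /(_ s) /connectP [p pp ->] {s}.
elim/last_ind: p pp => [|p y IH]; first by exists 0%N.
rewrite rcons_path => /andP [/IH [n /eqP hn] e].
by exists n.+1; rewrite last_rcons iterSr (kid_par e) hn.
Qed.

Definition dep (s : S) : nat := ex_minn (iter_root_ex s).

Lemma dep_spec s : iter (dep s) par s = root /\ forall n, iter n par s = root -> (dep s <= n)%N.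
Proof.
rewrite /dep; case: ex_minnP => m /eqP hm hmin; split => // n hn.
by apply: hmin; apply/eqP.
Qed.

Lemma iter_par_root n : iter n par root = root.
Proof. by elim: n => // n IH; rewrite iterS IH par_root. Qed.

Lemma dep_root : dep root = 0%N.
Proof. by case: (dep_spec root) => _ /(_ 0%N erefl); case: (dep root). Qed.

Lemma dep0 s : dep s = 0%N -> s = root.
Proof. by case: (dep_spec s) => h _ e; rewrite e in h. Qed.

Lemma dep_par s : s != root -> dep s = (dep (par s)).+1.
Proof.
move=> sr; case: (dep_spec s) => h1 h2; case: (dep_spec (par s)) => h3 h4.
apply/eqP; rewrite eqn_leq; apply/andP; split.
  by apply: h2; rewrite iterSr.
move: h1 h2; case: (dep s) => [/= e|k e _]; first by rewrite e eqxx in sr.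
by rewrite ltnS; apply: h4; rewrite -iterSr.
Qed.

Lemma dep_kid x c : c \in kids x -> dep c = (dep x).+1.
Proof. by move=> h; rewrite dep_par ?(kid_par h) // (kid_neq_root h). Qed.

Lemma dep_iter s i : (i <= dep s)%N -> dep (iter i par s) = (dep s - i)%N.
Proof.
elim: i => [|i IH] hi; first by rewrite subn0.
have hi' : (i <= dep s)%N by apply: ltnW.
have nr : iter i par s != root.
  apply/eqP => e; move: (IH hi'); rewrite e dep_root => /eqP.
  by rewrite eq_sym subn_eq0 leqNgt hi.
by rewrite iterS; move: (dep_par nr); rewrite IH // => h; rewrite subnS h.
Qed.

Lemma dep_lt s : (dep s < #|S|)%N.
Proof.
pose f := fun i : 'I_(dep s).+1 => iter i par s.
have inj : injective f.
  move=> i j; rewrite /f => e.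
  have := dep_iter (ltnSE (ltn_ord i)); rewrite e dep_iter ?(ltnSE (ltn_ord j)) //.
  move=> h; apply/val_inj => /=.
  have hi := ltnSE (ltn_ord i); have hj := ltnSE (ltn_ord j).
  by have := congr1 (fun k => dep s - k)%N h; rewrite !subKn.
by have := @leq_card _ _ f inj; rewrite card_ord.
Qed.

Lemma fuel_pos : (0 < fuel G)%N.
Proof. by apply: leq_ltn_trans (dep_lt root). Qed.

Definition anc (x l : S) : bool := iter (dep l - dep x) par l == x.

Lemma iter_big l n : (dep l <= n)%N -> iter n par l = root.
Proof.
move=> h; rewrite -(subnK h) iterD; case: (dep_spec l) => -> _.
exact: iter_par_root.
Qed.

Lemma ancP x l : reflect (exists n, iter n par l = x) (anc x l).
Proof.
apply: (iffP eqP) => [<-|[n hn]]; first by eexists.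
case: (leqP n (dep l)) => h.
  have := dep_iter h; rewrite hn => ->; rewrite subKn //.
have : x = root by rewrite -hn iter_big // ltnW.
move=> ex; rewrite ex dep_root subn0; exact: (proj1 (dep_spec l)).
Qed.

Lemma anc_refl x : anc x x.
Proof. by apply/ancP; exists 0%N. Qed.

Lemma anc_root l : anc root l.
Proof. by apply/ancP; exists (dep l); exact: (proj1 (dep_spec l)). Qed.

Lemma anc_kid x c l : c \in kids x -> anc c l -> anc x l.
Proof.
by move=> h /ancP [n hn]; apply/ancP; exists n.+1; rewrite iterS hn (kid_par h).
Qed.

Lemma anc_dep x l : anc x l -> (dep x <= dep l)%N.
Proof.
move/ancP => [n hn]; case: (leqP n (dep l)) => h.
  by rewrite -hn dep_iter // leq_subr.
by rewrite -hn iter_big ?dep_root // ltnW.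
Qed.

Lemma anc_kid_not x c : c \in kids x -> ~~ anc c x.
Proof.
move=> h; apply/negP => /anc_dep; rewrite (dep_kid h); by rewrite ltnn.
Qed.

Lemma anc_split x l : anc x l -> l != x -> exists2 c, c \in kids x & anc c l.
Proof.
rewrite /anc => /eqP e nlx.
have hd : (dep x < dep l)%N.
  rewrite ltn_neqAle; apply/andP; split; last first.
    by apply: anc_dep; rewrite /anc e.
  apply/eqP => d; move: e; rewrite d subnn /= => e; by rewrite e eqxx in nlx.
set k := (dep l - dep x)%N in e.
have kpos : (0 < k)%N by rewrite subn_gt0.
have hk : (k.-1 <= dep l)%N by rewrite /k; apply: leq_trans (leq_pred _) (leq_subr _ _).
have nr : iter k.-1 par l != root.
  apply/eqP => er; move: (dep_iter hk); rewrite er dep_root => /eqP.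
  rewrite /k; move: hd; lia.
exists (iter k.-1 par l).
  by rewrite -e -(prednK kpos) iterS prednK //; apply: par_kid.
by apply/ancP; exists k.-1.
Qed.

Lemma anc_uniq x c c' l : c \in kids x -> c' \in kids x -> anc c l -> anc c' l -> c = c'.
Proof.
move=> h h'; rewrite /anc (dep_kid h) (dep_kid h') => /eqP <- /eqP <- //.
Qed.

Lemma anc_leaf x l : is_leaf x -> anc x l -> l = x.
Proof.
move=> lf a; case: (eqVneq l x) => // ne; case: (anc_split a ne) => c.
by move: lf; rewrite /is_leaf => /eqP ->.
Qed.


Fixpoint hw (n : nat) (s : S) : bool :=
  if n is n'.+1 then has (hw n') (kids s) else true.

Lemma hw_dep n s : hw n s -> (n + dep s < #|S|)%N.
Proof.
elim: n s => [|n IH] s /=; first by rewrite add0n dep_lt.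
case/hasP => c cs /IH; by rewrite (dep_kid cs) addnS addSn.
Qed.

Lemma nhw_fuel s : ~~ hw (fuel G) s.
Proof. apply/negP => /hw_dep; rewrite /fuel; lia. Qed.

Lemma nhw_kid n s c : ~~ hw n.+1 s -> c \in kids s -> ~~ hw n c.
Proof. by move=> /hasPn h /h. Qed.

Lemma nhw_kid_fuel x c : c \in kids x -> ~~ hw (fuel G).-1 c.
Proof.
move=> h; apply/negP => /hw_dep; rewrite (dep_kid h) /fuel; have := fuel_pos; rewrite /fuel; lia.
Qed.

Lemma nhw_pos n s : ~~ hw n s -> (0 < n)%N.
Proof. by case: n. Qed.

Section Stab.
Variable X : Type.
Variable g : nat -> S -> X.
Variable Phi : S -> (S -> X) -> X.
Hypothesis gS : forall n s, g n.+1 s = Phi s (g n).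
Hypothesis Phi_congr : forall s f f', (forall c, c \in kids s -> f c = f' c) -> Phi s f = Phi s f'.

Lemma stab m s : ~~ hw m s -> forall n, (m <= n)%N -> g n s = g m s.
Proof.
elim: m s => [|m IH] s //= hs [|n] //= hn.
rewrite !gS; apply: Phi_congr => c cs; apply: IH => //.
by move/hasPn: hs => /(_ c cs).
Qed.

Lemma fix_eq s : g (fuel G) s = Phi s (g (fuel G)).
Proof.
have := fuel_pos; case E: (fuel G) => [//|m] _; rewrite gS.
apply: Phi_congr => c cs; have hc : ~~ hw m c by have := nhw_kid_fuel cs; rewrite E.
by rewrite (stab hc (n:=m.+1)).
Qed.
End Stab.

Lemma tree_ind (P : S -> Prop) :
  (forall s, (forall c, c \in kids s -> P c) -> P s) -> forall s, P s.
Proof.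
move=> h s; suff: forall m s, ~~ hw m s -> P s by apply; apply: nhw_fuel.
elim=> [|m IH] {}s //= hs; apply: h => c cs; apply: IH.
by move/hasPn: hs => /(_ c cs).
Qed.

Lemma sum_parents (F : S -> R) s : s != root ->
  (\sum_(x : S | s \in kids x) F x) = F (par s).
Proof. by move=> sr; apply: big_pred1 => x; rewrite /= kidsE. Qed.

Lemma reach_fix (pi : S -> S -> R) s :
  reach pi s = if s == root then 1 else reach pi (par s) * pi (par s) s.
Proof.
have stabr : forall k s, dep s = k -> forall n, (k <= n)%N -> reach_n pi n s = reach_n pi k s.
  elim=> [|k IH] {}s hk n hn.
    have -> := dep0 hk; by case: n {hn} => [|n] /=; rewrite eqxx.
  case: n hn => [//|n] hn /=.
  have sr : s != root by apply/eqP => e; rewrite e dep_root in hk.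
  rewrite (negbTE sr) !sum_parents //; congr (_ * _).
  have hp : dep (par s) = k by move: hk; rewrite dep_par //; case.
  by rewrite (IH _ hp n hn).
have reachS : forall m s, reach_n pi m.+1 s = if s == root then 1 else reach_n pi m (par s) * pi (par s) s.
  move=> m t /=; case: ifP => // /negbT tr; by rewrite sum_parents.
rewrite /reach; have := fuel_pos; case E: (fuel G) => [//|m] _.
rewrite reachS; case: ifP => // /negbT sr; congr (_ * _).
have hp : (dep (par s) <= m)%N.
  have h1 := dep_lt s; rewrite dep_par // in h1; move: h1 E; rewrite /fuel; lia.
by rewrite (stabr _ _ erefl m hp) (stabr _ _ erefl m.+1 (leqW hp)).
Qed.

Lemma sum_anc_split (phi : S -> R) x : ~~ is_leaf x -> phi x = 0 ->
  \sum_(l | anc x l) phi l = \sum_(c <- kids x) \sum_(l | anc c l) phi l.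
Proof.
move=> nl px.
have ex : \sum_(c <- kids x) \sum_(l | anc c l) phi l = \sum_l \sum_(c <- kids x | anc c l) phi l.
  under eq_bigr do rewrite big_mkcond.
  rewrite exchange_big /=; apply: eq_bigr => l _; by rewrite -big_mkcond.
rewrite ex [LHS]big_mkcond /=; apply: eq_bigr => l _.
case: (eqVneq l x) => [->|nlx].
  rewrite px if_same big1_seq //= => c /andP [ac cx]; by rewrite (negbTE (anc_kid_not cx)) in ac.
case: ifP => al.
  case: (anc_split al nlx) => c cx acl.
  rewrite (big_rem c cx) /= acl big1_seq ?addr0 // => c' /andP [ac' c'r].
  have c'x : c' \in kids x by apply: (mem_rem c'r).
  have := anc_uniq cx c'x acl ac' => e.
  case: wf => /(_ x) u _ _ _.
  by move: c'r; rewrite -e mem_rem_uniqF.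
rewrite big1_seq // => c /andP [ac cx]; by rewrite (anc_kid cx ac) in al.
Qed.

Lemma anc_dep_eq x y : anc x y -> dep x = dep y -> x = y.
Proof. by rewrite /anc => /eqP hx e; rewrite -hx e subnn. Qed.

Lemma anc_comp x y l : anc x l -> anc y l -> anc x y || anc y x.
Proof.
rewrite /anc => /eqP hx /eqP hy.
case: (leqP (dep x) (dep y)) => h.
  apply/orP; left; apply/ancP.
  exists (dep y - dep x)%N; rewrite -{2}hy -iterD; rewrite -[in RHS]hx; congr (iter _ _ _).
  have hyl : (dep y <= dep l)%N by apply: anc_dep; rewrite /anc hy.
  lia.
apply/orP; right; apply/ancP.
exists (dep x - dep y)%N; rewrite -{2}hx -iterD; rewrite -[in RHS]hy; congr (iter _ _ _).
have hxl : (dep x <= dep l)%N by apply: anc_dep; rewrite /anc hx.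
lia.
Qed.

Lemma anc_strict x y : anc x y -> y != x -> (dep x < dep y)%N.
Proof.
move=> a ne; rewrite ltn_neqAle anc_dep // andbT; apply/eqP => e.
by move: ne; rewrite (anc_dep_eq a e) eqxx.
Qed.

End Tree.
Section Cara.
Variable R : realType.
Variable Gr : R * R -> Prop.

Definition RepW (w X A : R) : Prop :=
  exists (p q : R * R) (l k : R), [/\ Gr p, Gr q, 0 <= l, 0 <= k &
    [/\ l + k = w, l * p.1 + k * q.1 = X & A <= l * p.2 + k * q.2]].

Lemma RepW_le w X A A' : A' <= A -> RepW w X A -> RepW w X A'.
Proof.
move=> h [p [q [l [k [gp gq l0 k0 [e1 e2 e3]]]]]].
exists p, q, l, k; split=> //; split=> //; exact: le_trans e3.
Qed.

Lemma RepW_pt p : Gr p -> forall w, 0 <= w -> RepW w (w * p.1) (w * p.2).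
Proof. move=> gp w w0; exists p, p, w, 0; split=> //; split; rewrite ?addr0 ?mul0r ?addr0 //. Qed.

Lemma RepW_scale w X A k : 0 <= k -> RepW w X A -> RepW (k * w) (k * X) (k * A).
Proof.
move=> k0 [p [q [l [m [gp gq l0 m0 [e1 e2 e3]]]]]].
exists p, q, (k * l), (k * m); split=> //; try exact: mulr_ge0.
split; first by rewrite -e1 mulrDr.
  by rewrite -e2 mulrDr !mulrA.
have := ler_wpM2l k0 e3; lra.
Qed.

Lemma line_rep p q (W X A : R) : Gr p -> Gr q -> p.1 < q.1 ->
  W * p.1 <= X -> X <= W * q.1 ->
  A * (q.1 - p.1) <= (W * q.1 - X) * p.2 + (X - W * p.1) * q.2 -> RepW W X A.
Proof.
move=> gp gq lt h1 h2 h3.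
have d0 : 0 < q.1 - p.1 by rewrite subr_gt0.
have dn : q.1 - p.1 != 0 by rewrite gt_eqF.
exists p, q, ((W * q.1 - X) / (q.1 - p.1)), ((X - W * p.1) / (q.1 - p.1)).
split=> //; try (apply: divr_ge0; lra).
split.
- by field.
- by field.
- rewrite -ler_pdivlMr // in h3; apply: le_trans h3 _.
  by rewrite le_eqVlt; apply/orP; left; apply/eqP; field.
Qed.

Lemma threeW_sorted (p1 p2 p3 : R * R) (l1 l2 l3 : R) :
  Gr p1 -> Gr p2 -> Gr p3 -> 0 <= l1 -> 0 <= l2 -> 0 <= l3 ->
  p1.1 <= p2.1 -> p2.1 <= p3.1 ->
  RepW (l1 + l2 + l3) (l1 * p1.1 + l2 * p2.1 + l3 * p3.1) (l1 * p1.2 + l2 * p2.2 + l3 * p3.2).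
Proof.
case: p1 p2 p3 => [x1 v1] [x2 v2] [x3 v3] /= g1 g2 g3 l10 l20 l30 h12 h23.
set W := l1 + l2 + l3; set X := l1 * x1 + l2 * x2 + l3 * x3; set A := l1 * v1 + l2 * v2 + l3 * v3.
have d12 : 0 <= x2 - x1 by rewrite subr_ge0.
have d23 : 0 <= x3 - x2 by rewrite subr_ge0.
have d13 : 0 <= x3 - x1 by rewrite subr_ge0 (le_trans h12 h23).
have hX1 : W * x1 <= X.
  have := mulr_ge0 l20 d12; have := mulr_ge0 l30 d13.
  rewrite /W /X; lra.
have hX3 : X <= W * x3.
  have := mulr_ge0 l10 d13; have := mulr_ge0 l20 d23.
  rewrite /W /X; lra.
case: (eqVneq x1 x3) => [e13|n13].
  have e12 : x1 = x2 by apply/eqP; rewrite eq_le h12 e13 h23.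
  have eX : X = W * x1 by rewrite /X /W -e12 e13 -e13; ring.
  have hw0 : 0 <= W by rewrite /W; lra.
  have key : forall (p : R * R), Gr p -> p.1 = x1 -> v1 <= p.2 -> v2 <= p.2 -> v3 <= p.2 -> RepW W X A.
    move=> p gp px a1 a2 a3; rewrite eX -px /A.
    apply: RepW_le (RepW_pt gp hw0).
    have := ler_wpM2l l10 a1; have := ler_wpM2l l20 a2; have := ler_wpM2l l30 a3.
    rewrite /W; lra.
  case: (leP v1 v2) => a12; case: (leP v2 v3) => a23; case: (leP v1 v3) => a13.
  all: try (apply: (key (x3, v3)) => //=; rewrite ?e13; lra).
  all: try (apply: (key (x2, v2)) => //=; rewrite ?e12; lra).
  all: try (apply: (key (x1, v1)) => //=; lra).
have l13 : x1 < x3 by rewrite lt_neqAle n13 (le_trans h12 h23).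
have dom : forall (p q : R * R) (m1 m2 m3 : R),
   m1 <= p.2 * (q.1 - x1) + q.2 * (x1 - p.1) ->
   m2 <= p.2 * (q.1 - x2) + q.2 * (x2 - p.1) ->
   m3 <= p.2 * (q.1 - x3) + q.2 * (x3 - p.1) ->
   v1 * (q.1 - p.1) <= m1 -> v2 * (q.1 - p.1) <= m2 -> v3 * (q.1 - p.1) <= m3 ->
   A * (q.1 - p.1) <= (W * q.1 - X) * p.2 + (X - W * p.1) * q.2.
  move=> p q m1 m2 m3 b1 b2 b3 c1 c2 c3.
  have := ler_wpM2l l10 (le_trans c1 b1); have := ler_wpM2l l20 (le_trans c2 b2).
  have := ler_wpM2l l30 (le_trans c3 b3).
  rewrite /A /W /X; lra.
case: (leP (v2 * (x3 - x1)) (v1 * (x3 - x2) + v3 * (x2 - x1))) => D13.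
  apply: (line_rep (p := (x1, v1)) (q := (x3, v3))) => //=.
  apply: (dom (x1, v1) (x3, v3) _ _ _ (lexx _) (lexx _) (lexx _)) => /=; clear dom; lra.
case: (eqVneq x1 x2) => [e12|n12].
  subst x2.
  apply: (line_rep (p := (x1, v2)) (q := (x3, v3))) => //=.
  apply: (dom (x1, v2) (x3, v3) _ _ _ (lexx _) (lexx _) (lexx _)) => /=; clear dom; lra.
have l12 : x1 < x2 by rewrite lt_neqAle n12 h12.
case: (leP X (W * x2)) => hX2.
  apply: (line_rep (p := (x1, v1)) (q := (x2, v2))) => //=.
  apply: (dom (x1, v1) (x2, v2) _ _ _ (lexx _) (lexx _) (lexx _)) => /=; clear dom; lra.
have l23 : x2 < x3.
  rewrite lt_neqAle h23 andbT; apply/eqP => e23; move: hX2 hX3; rewrite e23; lra.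
apply: (line_rep (p := (x2, v2)) (q := (x3, v3))) => //=; first exact: ltW.
apply: (dom (x2, v2) (x3, v3) _ _ _ (lexx _) (lexx _) (lexx _)) => /=; clear dom; lra.
Qed.

End Cara.

Section Cara2.
Variable R : realType.
Variable Gr : R * R -> Prop.

Lemma RepW_eq w X A w' X' A' : w = w' -> X = X' -> A = A' -> RepW Gr w X A -> RepW Gr w' X' A'.
Proof. by move=> -> -> ->. Qed.

Lemma threeW (p1 p2 p3 : R * R) (l1 l2 l3 : R) :
  Gr p1 -> Gr p2 -> Gr p3 -> 0 <= l1 -> 0 <= l2 -> 0 <= l3 ->
  RepW Gr (l1 + l2 + l3) (l1 * p1.1 + l2 * p2.1 + l3 * p3.1) (l1 * p1.2 + l2 * p2.2 + l3 * p3.2).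
Proof.
move=> g1 g2 g3 a1 a2 a3.
case/orP: (le_total p1.1 p2.1) => h12; case/orP: (le_total p2.1 p3.1) => h23.
- exact: threeW_sorted.
- case/orP: (le_total p1.1 p3.1) => h13.
  + apply: RepW_eq (threeW_sorted g1 g3 g2 a1 a3 a2 h13 h23); ring.
  + apply: RepW_eq (threeW_sorted g3 g1 g2 a3 a1 a2 h13 h12); ring.
- case/orP: (le_total p1.1 p3.1) => h13.
  + apply: RepW_eq (threeW_sorted g2 g1 g3 a2 a1 a3 h12 h13); ring.
  + apply: RepW_eq (threeW_sorted g2 g3 g1 a2 a3 a1 h23 h13); ring.
- apply: RepW_eq (threeW_sorted g3 g2 g1 a3 a2 a1 h23 h12); ring.
Qed.

Lemma addW w1 X1 A1 w2 X2 A2 : RepW Gr w1 X1 A1 -> RepW Gr w2 X2 A2 ->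
  RepW Gr (w1 + w2) (X1 + X2) (A1 + A2).
Proof.
case=> p1 [p2 [a1 [a2 [g1 g2 a10 a20 [e1 e2 e3]]]]].
case=> q1 [q2 [b1 [b2 [h1 h2 b10 b20 [f1 f2 f3]]]]].
have [r1 [r2 [c1 [c2 [k1 k2 c10 c20 [d1 d2 d3]]]]]] := threeW g1 g2 h1 a10 a20 b10.
have H := threeW k1 k2 h2 c10 c20 b20.
have hA : A1 + A2 <= c1 * r1.2 + c2 * r2.2 + b2 * q2.2 by lra.
have H' := RepW_le hA H.
apply: RepW_eq H'; lra.
Qed.
End Cara2.
Section EPFgen.
Variable R : realType.
Variable I : eqType.
Variable ks : seq I.
Variable g : I -> R -> \bar R.
Hypothesis g_noinf : forall i x, g i x != +oo%E.

Definition Grg (p : R * R) : Prop := exists2 i, i \in ks & g i p.1 = p.2%:E.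

Definition sv (i1 i2 : I) (t m1 m2 : R) : \bar R :=
  (t%:E * g i1 m1 + (1 - t)%:E * g i2 m2)%E.

Lemma gt0_mulrNy' (t : R) : 0 < t -> (t%:E * -oo)%E = -oo%E.
Proof. by move=> t0; rewrite mulrNy gtr0_sg // mul1e. Qed.

Lemma sv_cases i1 i2 t m1 m2 : i1 \in ks -> i2 \in ks -> 0 <= t <= 1 ->
  sv i1 i2 t m1 m2 = -oo%E \/
  exists a, sv i1 i2 t m1 m2 = a%:E /\ RepW Grg 1 (t * m1 + (1 - t) * m2) a.
Proof.
move=> k1 k2 /andP [t0 t1]; rewrite /sv.
have ng1 := g_noinf i1 m1; have ng2 := g_noinf i2 m2.
case E1: (g i1 m1) ng1 => [v1| |] // _; case E2: (g i2 m2) ng2 => [v2| |] // _.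
- right; exists (t * v1 + (1 - t) * v2); split; first by rewrite -!EFinM -EFinD.
  exists (m1, v1), (m2, v2), t, (1 - t); split=> //; try lra.
  + by exists i1.
  + by exists i2.
  + by split=> //; lra.
- case: (eqVneq t 1) => [->|nt1].
    right; exists v1; rewrite subrr mul0e adde0 mul1e; split=> //.
    apply: (RepW_eq _ _ _ (@RepW_pt R Grg (m1, v1) _ 1 (@ler01 R))); rewrite /=; try ring.
    by exists i1.
  left; rewrite gt0_mulrNy' ?addeNy //; rewrite lt_neqAle subr_ge0 t1 andbT eq_sym subr_eq0 eq_sym nt1 //.
- case: (eqVneq t 0) => [->|nt0].
    right; exists v2; rewrite subr0 mul0e add0e mul1e; split=> //.
    apply: (RepW_eq _ _ _ (@RepW_pt R Grg (m2, v2) _ 1 (@ler01 R))); rewrite /=; try ring.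
    by exists i2.
  left; rewrite gt0_mulrNy' ?addNye // lt_neqAle t0 eq_sym nt0 //.
- left; case: (eqVneq t 0) => [->|nt0].
    by rewrite mul0e add0e subr0 mul1e.
  by rewrite gt0_mulrNy' ?addNye // lt_neqAle t0 eq_sym nt0 //.
Qed.

Lemma rep_sv X a : RepW Grg 1 X a -> exists i1 i2 t m1 m2,
  [/\ i1 \in ks, i2 \in ks, 0 <= t <= 1, t * m1 + (1 - t) * m2 = X & (a%:E <= sv i1 i2 t m1 m2)%E].
Proof.
case=> p [q [l [k [[i1 k1 e1] [i2 k2 e2] l0 k0 [h1 h2 h3]]]]].
have ek : k = 1 - l by lra.
exists i1, i2, l, p.1, q.1; split=> //.
- by apply/andP; split; lra.
- by rewrite -ek.
- by rewrite /sv e1 e2 -ek -!EFinM -EFinD lee_fin.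
Qed.

Lemma rep_le_concave h X a : concave_ext h -> (forall i x, i \in ks -> (g i x <= h x)%E) ->
  RepW Grg 1 X a -> (a%:E <= h X)%E.
Proof.
move=> hc hd [p [q [l [k [[i1 k1 e1] [i2 k2 e2] l0 k0 [h1 h2 h3]]]]]].
have ek : k = 1 - l by lra.
have hp : (p.2%:E <= h p.1)%E by rewrite -e1 hd.
have hq : (q.2%:E <= h q.1)%E by rewrite -e2 hd.
have hl : 0 <= l <= 1 by apply/andP; split; lra.
have := hc p.1 q.1 p.2 q.2 l hl hp hq.
rewrite -ek h2; apply: le_trans; by rewrite lee_fin.
Qed.

Lemma rep_env X a : RepW Grg 1 X a -> (a%:E <= env (fun i => i \in ks) g X)%E.
Proof.
move=> hr; apply: le_ereal_inf_tmp => y [h [hc hd] <-].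
by apply: rep_le_concave hr => // i x ik; apply: hd.
Qed.

Lemma sv_le_env i1 i2 t m1 m2 : i1 \in ks -> i2 \in ks -> 0 <= t <= 1 ->
  (sv i1 i2 t m1 m2 <= env (fun i => i \in ks) g (t * m1 + (1 - t) * m2))%E.
Proof.
move=> k1 k2 ht; case: (sv_cases m1 m2 k1 k2 ht) => [->|[a [-> hr]]].
  by rewrite leNye.
exact: rep_env.
Qed.

Variable H : R -> \bar R.
Hypothesis H_ub : forall X i1 i2 t m1 m2, i1 \in ks -> i2 \in ks -> 0 <= t <= 1 ->
  t * m1 + (1 - t) * m2 = X -> (sv i1 i2 t m1 m2 <= H X)%E.
Hypothesis H_att : forall X, exists i1 i2 t m1 m2,
  [/\ i1 \in ks, i2 \in ks, 0 <= t <= 1, t * m1 + (1 - t) * m2 = X & H X = sv i1 i2 t m1 m2].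

Lemma H_rep X a : (a%:E <= H X)%E -> RepW Grg 1 X a.
Proof.
case: (H_att X) => i1 [i2 [t [m1 [m2 [k1 k2 ht hX ->]]]]].
case: (sv_cases m1 m2 k1 k2 ht) => [->|[b [-> hr]]]; first by rewrite leeNy_eq.
by rewrite lee_fin => hab; rewrite -hX; apply: RepW_le hr.
Qed.

Lemma H_concave : concave_ext H.
Proof.
move=> x y a b t /andP [t0 t1] hx hy.
have r1 := RepW_scale t0 (H_rep hx).
have t0' : 0 <= 1 - t by lra.
have r2 := RepW_scale t0' (H_rep hy).
have r := addW r1 r2.
have r' : RepW Grg 1 (t * x + (1 - t) * y) (t * a + (1 - t) * b).
  by apply: RepW_eq r; ring.
case: (rep_sv r') => i1 [i2 [u [m1 [m2 [k1 k2 hu hX hle]]]]].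
exact: (le_trans hle (H_ub k1 k2 hu hX)).
Qed.

Lemma H_dom i x : i \in ks -> (g i x <= H x)%E.
Proof.
move=> ik; have := @H_ub x i i 1 x x ik ik.
rewrite /sv subrr mul0e adde0 mul1e; apply; first by rewrite ler01 lexx.
ring.
Qed.

Lemma env_le_H X : (env (fun i => i \in ks) g X <= H X)%E.
Proof.
apply: ge_ereal_inf; exists (H X) => //; exists H => //; split.
  exact: H_concave.
by move=> i x ik; apply: H_dom.
Qed.
End EPFgen.
Section Main.
Variable R : realType.
Variable G : game R.
Local Notation S := (St G).
Local Notation root := (groot G).
Variable U : S -> R -> \bar R.
Variable eps : R.
Variable sel : S -> R -> (S * S * R * R * R)%type.
Hypothesis wf : wf_game G.
Hypothesis lrn : learned U.
Hypothesis loss : forall s, loss_le (U s) (target U s) eps.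
Hypothesis isel : induced_sel U sel.

Local Notation anc := (anc wf).
Local Notation dep := (dep wf).
Local Notation gg s := (fun c => trunc (U c) (beta s c)).

Lemma U_noinf s x : U s x != +oo%E.
Proof. by case: (loss s x) => [[-> _]|[a [b [-> _ _]]]]. Qed.

Lemma g_noinf s c x : gg s c x != +oo%E.
Proof. rewrite /trunc; case: ifP => // _; exact: U_noinf. Qed.

Lemma trunc_fin (f : R -> \bar R) t x v : trunc f t x = v%:E -> (t <= x%:E)%E /\ f x = v%:E.
Proof. by rewrite /trunc; case: ifP. Qed.

Lemma U_fin_ex s : exists mu a, U s mu = a%:E.
Proof.
have := lrn s; case: ifP => _.
  by move=> h; exists (r2 s), (r1 s); rewrite h /leafEPF eqxx.
case=> xs [ys [[_ hs _ _ _] h1 _ _]].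
by exists (nth 0 xs 0), (nth 0 ys 0); apply: h1.
Qed.

Lemma eps_ge0 : 0 <= eps.
Proof.
case: (U_fin_ex root) => mu [a ha].
case: (loss root mu) => [[h _]|[x [y [hx _ hxy]]]]; first by rewrite ha in h.
exact: le_trans (normr_ge0 _) hxy.
Qed.

Lemma target_nl s : ~~ is_leaf s ->
  target U s = env (fun c => c \in kids s) (gg s).
Proof. by rewrite /target => /negbTE ->. Qed.

Lemma split_eq s mu : ~~ is_leaf s -> split_val U s (sel s mu) = target U s mu.
Proof.
move=> nl; rewrite target_nl //.
have Hub : forall X i1 i2 t m1 m2, i1 \in kids s -> i2 \in kids s -> 0 <= t <= 1 ->
  t * m1 + (1 - t) * m2 = X -> (sv (gg s) i1 i2 t m1 m2 <= split_val U s (sel s X))%E.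
  move=> X i1 i2 t m1 m2 k1 k2 ht hX.
  have [_ /(_ (i1, i2, t, m1, m2))] := isel X nl; apply; by split.
have Hatt : forall X, exists i1 i2 t m1 m2,
  [/\ i1 \in kids s, i2 \in kids s, 0 <= t <= 1, t * m1 + (1 - t) * m2 = X &
      split_val U s (sel s X) = sv (gg s) i1 i2 t m1 m2].
  move=> X; have [+ _] := isel X nl.
  case: (sel s X) => [[[[c1 c2] t] m1] m2] [k1 k2 ht hX].
  by exists c1, c2, t, m1, m2.
apply/eqP; rewrite eq_le; apply/andP; split.
  case: (Hatt mu) => i1 [i2 [t [m1 [m2 [k1 k2 ht hX ->]]]]].
  rewrite -hX; apply: sv_le_env => //; exact: g_noinf.
apply: (env_le_H (g_noinf s) Hub Hatt).
Qed.

Lemma sv_fin (I : eqType) (g : I -> R -> \bar R) i1 i2 t m1 m2 b :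
  (forall i x, g i x != +oo%E) -> 0 <= t <= 1 -> sv g i1 i2 t m1 m2 = b%:E ->
  exists v1 v2, [/\ t = 0 \/ g i1 m1 = v1%:E, t = 1 \/ g i2 m2 = v2%:E & b = t * v1 + (1 - t) * v2].
Proof.
move=> gn /andP [t0 t1]; rewrite /sv.
have ng1 := gn i1 m1; have ng2 := gn i2 m2.
case E1: (g i1 m1) ng1 => [v1| |] // _; case E2: (g i2 m2) ng2 => [v2| |] // _.
- move=> [<-]; exists v1, v2; split; by [right|right|].
- case: (eqVneq t 1) => [->|nt1].
    rewrite subrr mul0e adde0 mul1e => [[<-]]; exists v1, 0; split; by [right|left|ring].
  rewrite gt0_mulrNy' ?addeNy //; rewrite lt_neqAle subr_ge0 t1 andbT eq_sym subr_eq0 eq_sym nt1 //.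
- case: (eqVneq t 0) => [->|nt0].
    rewrite subr0 mul0e add0e mul1e => [[<-]]; exists 0, v2; split; by [left|right|ring].
  rewrite gt0_mulrNy' ?addNye // lt_neqAle t0 eq_sym nt0 //.
- case: (eqVneq t 0) => [->|nt0].
    by rewrite mul0e add0e subr0 mul1e.
  by rewrite gt0_mulrNy' ?addNye // lt_neqAle t0 eq_sym nt0 //.
Qed.

Definition Hgt (s : S) : nat := @height_n R G (fuel G) s.

Lemma Hgt_kid s c : c \in kids s -> ((Hgt c).+1 <= Hgt s)%N.
Proof.
move=> cs; rewrite /Hgt.
have -> : @height_n R G (fuel G) s = \max_(c' <- kids s) (@height_n R G (fuel G) c').+1.
  apply: (fix_eq wf (g := @height_n R G) (Phi := fun s f => \max_(c <- kids s) (f c).+1)) => //.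
  move=> s' f f' h; apply: eq_big_seq => c' /h ->; done.
by apply: (@leq_bigmax_seq _ (kids s) xpredT (fun c => (@height_n R G (fuel G) c).+1) c cs).
Qed.

Lemma sel_fin s mu u : ~~ is_leaf s -> U s mu = u%:E ->
  let: (c1, c2, t, m1, m2) := sel s mu in
  exists v1 v2 b, [/\ c1 \in kids s, c2 \in kids s, 0 <= t <= 1, t * m1 + (1 - t) * m2 = mu &
    [/\ t = 0 \/ ((beta s c1 <= m1%:E)%E /\ U c1 m1 = v1%:E),
        t = 1 \/ ((beta s c2 <= m2%:E)%E /\ U c2 m2 = v2%:E),
        b = t * v1 + (1 - t) * v2 & `|u - b| <= eps]].
Proof.
move=> nl hu; have := split_eq mu nl; have [+ _] := isel mu nl.
case: (sel s mu) => [[[[c1 c2] t] m1] m2] [k1 k2 ht hX] /= hsv.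
case: (loss s mu) => [[h _]|[a [b [ha hb hab]]]]; first by rewrite hu in h.
rewrite hb in hsv; move: ha; rewrite hu => -[ea]; rewrite -ea in hab.
have := sv_fin (g_noinf s) ht hsv => -[v1 [v2 [h1 h2 h3]]].
exists v1, v2, b; split=> //; split=> //.
- by case: h1 => [->|/trunc_fin]; [left|right].
- by case: h2 => [->|/trunc_fin]; [left|right].
Qed.

Lemma ind_bound n s mu u : ~~ hw n s -> U s mu = u%:E ->
  `|ind_pay_n sel n s mu - u| <= (Hgt s)%:R * eps.
Proof.
have e0 := eps_ge0.
elim: n s mu u => [|n IH] s mu u //= hn hu.
case E: (kids s) => [|k ks] /=.
  have := lrn s; rewrite /is_leaf E eqxx => /(_ mu); rewrite hu /leafEPF.
  case: eqP => // _ [->]; rewrite subrr normr0; exact: mulr_ge0.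
have nl : ~~ is_leaf s by rewrite /is_leaf E.
have := sel_fin nl hu.
case: (sel s mu) => [[[[c1 c2] t] m1] m2] [v1 [v2 [b [k1 k2 /andP [t0 t1] hX [h1 h2 hb hub]]]]].
have hk1 := Hgt_kid k1; have hk2 := Hgt_kid k2.
set P1 := ind_pay_n sel n c1 m1; set P2 := ind_pay_n sel n c2 m2.
set Hs := (Hgt s)%:R.
have hs1 : (Hgt c1)%:R * eps <= (Hs - 1) * eps.
  apply: ler_wpM2r => //; rewrite /Hs lerBrDr natr1 ler_nat //.
have hs2 : (Hgt c2)%:R * eps <= (Hs - 1) * eps.
  apply: ler_wpM2r => //; rewrite /Hs lerBrDr natr1 ler_nat //.
have d1 : t * `|P1 - v1| <= t * ((Hs - 1) * eps).
  case: h1 => [->|[_ hv]]; first by rewrite !mul0r.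
  apply: ler_wpM2l => //; apply: le_trans hs1; apply: IH => //; exact: nhw_kid hn k1.
have d2 : (1 - t) * `|P2 - v2| <= (1 - t) * ((Hs - 1) * eps).
  case: h2 => [->|[_ hv]]; first by rewrite subrr !mul0r.
  apply: ler_wpM2l; first lra.
  apply: le_trans hs2; apply: IH => //; exact: nhw_kid hn k2.
have tri : `|t * P1 + (1 - t) * P2 - b| <= t * `|P1 - v1| + (1 - t) * `|P2 - v2|.
  rewrite hb; have -> : t * P1 + (1 - t) * P2 - (t * v1 + (1 - t) * v2) = t * (P1 - v1) + (1 - t) * (P2 - v2) by ring.
  have t1' : 0 <= 1 - t by lra.
  by apply: le_trans (ler_normD _ _) _; rewrite !normrM (ger0_norm t0) (ger0_norm t1').
have : `|t * P1 + (1 - t) * P2 - u| <= `|t * P1 + (1 - t) * P2 - b| + `|b - u|.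
  have -> : t * P1 + (1 - t) * P2 - u = (t * P1 + (1 - t) * P2 - b) + (b - u) by ring.
  exact: ler_normD.
rewrite distrC in hub; move=> h; apply: le_trans h _.
have : (Hs - 1) * eps + eps = Hs * eps by ring.
lra.
Qed.

Lemma exp_fix (pi : S -> S -> R) (f : S -> R) s :
  exp_n pi f (fuel G) s =
  if kids s is [::] then f s else \sum_(c <- kids s) pi s c * exp_n pi f (fuel G) c.
Proof.
apply: (fix_eq wf (g := exp_n pi f)
  (Phi := fun s h => if kids s is [::] then f s else \sum_(c <- kids s) pi s c * h c)) => //.
move=> s' h h' e; case E: (kids s') => [//|k ks]; rewrite -E.
by apply: eq_big_seq => c /e ->.
Qed.

Lemma sefce_bound (pi : S -> S -> R) : SEFCE pi -> forall s, 0 < reach pi s ->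
  exists u, U s (exp_n pi (@r2 _ G) (fuel G) s) = u%:E /\
            exp_n pi (@r1 _ G) (fuel G) s - (Hgt s)%:R * eps <= u.
Proof.
move=> [joint hsef]; have e0 := eps_ge0.
elim/(tree_ind wf) => s IH hr.
set F := fun x => exp_n pi (@r2 _ G) (fuel G) x.
set L := fun x => exp_n pi (@r1 _ G) (fuel G) x.
rewrite -/(F s) -/(L s).
have hF := exp_fix pi (@r2 _ G) s; have hL := exp_fix pi (@r1 _ G) s.
rewrite -/(F s) -/(L s) in hF hL.
case E: (kids s) hF hL => [|k ks] hF hL.
  exists (r1 s); split.
    have := lrn s; rewrite /is_leaf E eqxx => ->; by rewrite hF /leafEPF eqxx.
  rewrite hL lerBlDr lerDl; apply: mulr_ge0 => //.
rewrite -E in hF hL.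
have nl : ~~ is_leaf s by rewrite /is_leaf E.
have [pos sum1] := joint s nl.
set Hs := (Hgt s)%:R.
set a := fun c => L c - (Hs - 1) * eps.
have kid_pt : forall c, c \in kids s -> 0 < pi s c ->
    exists2 uc, gg s c (F c) = uc%:E & a c <= uc.
  move=> c cs pc.
  have rc : 0 < reach pi c.
    rewrite (reach_fix wf) (negbTE (kid_neq_root wf cs)) (kid_par wf cs); exact: mulr_gt0.
  case: (IH c cs rc) => uc [hu hle]; exists uc.
    rewrite /trunc ifT // /beta; case: ifP => ld; first by rewrite leNye.
    by apply: hsef => //; [rewrite ld|exact: mulr_gt0].
  apply: le_trans hle; rewrite /a lerD2l lerN2; apply: ler_wpM2r => //.
  have := Hgt_kid cs; rewrite /Hs lerBrDr natr1 ler_nat => h; exact: h.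
have build : forall l, {subset l <= kids s} ->
    [/\ \sum_(c <- l) pi s c = 0, \sum_(c <- l) pi s c * F c = 0 & \sum_(c <- l) pi s c * a c = 0]
    \/ RepW (Grg (kids s) (gg s)) (\sum_(c <- l) pi s c) (\sum_(c <- l) pi s c * F c)
                                  (\sum_(c <- l) pi s c * a c).
  elim=> [|c l IHl] sub; first by left; rewrite !big_nil.
  have cs : c \in kids s by apply: sub; rewrite inE eqxx.
  have sub' : {subset l <= kids s} by move=> x xl; apply: sub; rewrite inE xl orbT.
  rewrite !big_cons.
  case: (eqVneq (pi s c) 0) => [p0|pn0].
    rewrite p0 !mul0r !add0r; exact: IHl.
  have pc : 0 < pi s c by rewrite lt_neqAle eq_sym pn0 pos.
  case: (kid_pt c cs pc) => uc huc hac.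
  have rc : RepW (Grg (kids s) (gg s)) (pi s c) (pi s c * F c) (pi s c * a c).
    have := @RepW_pt R (Grg (kids s) (gg s)) (F c, uc) _ (pi s c) (pos c cs).
    move=> /(_ _) h; apply: RepW_le (h _); first by apply: ler_wpM2l => //; exact: pos.
    by exists c.
  right; case: (IHl sub') => [[-> -> ->]|rl]; first by rewrite !addr0.
  exact: addW rc rl.
case: (build (kids s) (fun x h => h)) => [[h _ _]|rep].
  by rewrite sum1 in h; move/eqP: h; rewrite oner_eq0.
rewrite sum1 -hF in rep.
have ea : \sum_(c <- kids s) pi s c * a c = L s - (Hs - 1) * eps.
  rewrite hL /a; under eq_bigr do rewrite mulrBr.
  by rewrite sumrB -mulr_suml sum1 mul1r.
rewrite ea in rep.
have := rep_env rep; rewrite -target_nl //.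
case: (loss s (F s)) => [[_ ->]|[u [b [hu hb hub]]]]; first by rewrite leeNy_eq.
rewrite hb lee_fin => hlb; exists u; split=> //.
have : b - u <= eps by apply: le_trans (ler_norm _) _; rewrite distrC.
lra.
Qed.


(* (C) the induced strategy as an SEFCE *)
Fixpoint rho_n (n : nat) (s : S) (mu : R) (l : S) : R :=
  match n with
  | 0 => (l == s)%:R
  | n'.+1 => if kids s is [::] then (l == s)%:R
             else let '(c1, c2, t, m1, m2) := sel s mu in
                  t * rho_n n' c1 m1 l + (1 - t) * rho_n n' c2 m2 l
  end.

Lemma sum_ind (f : S -> R) s : \sum_l (l == s)%:R * f l = f s.
Proof.
rewrite (bigD1 s) //= eqxx mul1r big1 ?addr0 // => l /negbTE ->; by rewrite mul0r.
Qed.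

Lemma sel_feas s mu : ~~ is_leaf s -> feasible s mu (sel s mu).
Proof. by move=> nl; case: (isel mu nl). Qed.

Lemma rho_ge0 n s mu l : 0 <= rho_n n s mu l.
Proof.
elim: n s mu => [|n IH] s mu /=; first by rewrite ler0n.
case E: (kids s) => [|k ks]; first by rewrite ler0n.
have nl : ~~ is_leaf s by rewrite /is_leaf E.
have := sel_feas mu nl.
case: (sel s mu) => [[[[c1 c2] t] m1] m2] [k1 k2 /andP [t0 t1] hX].
apply: addr_ge0; apply: mulr_ge0 => //; lra.
Qed.

Lemma rho_sum n s mu : \sum_l rho_n n s mu l = 1.
Proof.
have base : forall s : S, \sum_(l : S) ((l == s)%:R : R) = 1.
  by move=> x; rewrite -[RHS](sum_ind (fun => 1) x); apply: eq_bigr => l _; rewrite mulr1.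
elim: n s mu => [|n IH] s mu /=; first exact: base.
case E: (kids s) => [|k ks]; first exact: base.
case: (sel s mu) => [[[[c1 c2] t] m1] m2] /=.
rewrite big_split /= -!mulr_sumr !IH; ring.
Qed.

Lemma rho_supp n s mu l : ~~ hw n s -> rho_n n s mu l != 0 -> is_leaf l && anc s l.
Proof.
elim: n s mu => [|n IH] s mu //= hn.
case E: (kids s) => [|k ks].
  case: (eqVneq l s) => [->|nls]; last by rewrite eqxx.
  by rewrite /is_leaf E eqxx (anc_refl wf).
have nl : ~~ is_leaf s by rewrite /is_leaf E.
have := sel_feas mu nl.
case: (sel s mu) => [[[[c1 c2] t] m1] m2] [k1 k2 _ _] hne.
have [a|h] := eqVneq (t * rho_n n c1 m1 l) 0.
  have [b|h'] := eqVneq ((1 - t) * rho_n n c2 m2 l) 0; first by rewrite a b addr0 eqxx in hne.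
  move: h'; rewrite mulf_eq0 negb_or => /andP [_ h'].
  have /andP [-> a'] := IH _ _ (nhw_kid hn k2) h'; exact: anc_kid k2 a'.
move: h; rewrite mulf_eq0 negb_or => /andP [_ h].
have /andP [-> a'] := IH _ _ (nhw_kid hn k1) h; exact: anc_kid k1 a'.
Qed.

Lemma rho_pay n s mu : \sum_l rho_n n s mu l * r1 l = ind_pay_n sel n s mu.
Proof.
elim: n s mu => [|n IH] s mu /=; first exact: sum_ind.
case E: (kids s) => [|k ks]; first exact: sum_ind.
case: (sel s mu) => [[[[c1 c2] t] m1] m2] /=.
under eq_bigr do rewrite mulrDl -!mulrA.
by rewrite big_split /= -!mulr_sumr !IH.
Qed.

Lemma rho_r2 n s mu u : ~~ hw n s -> U s mu = u%:E -> \sum_l rho_n n s mu l * r2 l = mu.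
Proof.
elim: n s mu u => [|n IH] s mu u //= hn hu.
case E: (kids s) => [|k ks].
  rewrite sum_ind.
  have := lrn s; rewrite /is_leaf E eqxx => /(_ mu); rewrite hu /leafEPF.
  by case: eqP.
have nl : ~~ is_leaf s by rewrite /is_leaf E.
have := sel_fin nl hu.
case: (sel s mu) => [[[[c1 c2] t] m1] m2] [v1 [v2 [b [k1 k2 _ hX [h1 h2 _ _]]]]] /=.
under eq_bigr do rewrite mulrDl -!mulrA.
rewrite big_split /= -!mulr_sumr -hX.
congr (_ + _).
  case: h1 => [->|[_ hv]]; first by rewrite !mul0r.
  by rewrite (IH _ _ _ (nhw_kid hn k1) hv).
case: h2 => [->|[_ hv]]; first by rewrite subrr !mul0r.
by rewrite (IH _ _ _ (nhw_kid hn k2) hv).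
Qed.

Lemma rho_tau n s mu u : ~~ hw n s -> U s mu = u%:E ->
  forall d c tv, ~~ is_leaf d -> ~~ leader d -> c \in kids d -> anc s c -> c != s ->
  tau d c = tv%:E -> 0 <= \sum_(l | anc c l) rho_n n s mu l * (r2 l - tv).
Proof.
elim: n s mu u => [|n IH] s mu u //= hn hu d c tv nld nlead cd asc ncs htau.
case E: (kids s) => [|k ks].
  have lf : is_leaf s by rewrite /is_leaf E.
  by move: ncs; rewrite (anc_leaf lf asc) eqxx.
have nl : ~~ is_leaf s by rewrite /is_leaf E.
have := sel_fin nl hu.
case Es: (sel s mu) => [[[[c1 c2] t] m1] m2] [v1 [v2 [b [k1 k2 /andP [t0 t1] hX [h1 h2 _ _]]]]].
have part : forall ci mi vi w, ci \in kids s -> 0 <= w ->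
    (w = 0 \/ ((beta s ci <= mi%:E)%E /\ U ci mi = vi%:E)) ->
    0 <= w * \sum_(l | anc c l) rho_n n ci mi l * (r2 l - tv).
  move=> ci mi vi w ci_s w0 [->|[hb hv]]; first by rewrite mul0r.
  apply: mulr_ge0 => //.
  have hci := nhw_kid hn ci_s.
  case: (eqVneq c ci) => [ec|nc].
    rewrite ec.
    have -> : \sum_(l | anc ci l) rho_n n ci mi l * (r2 l - tv) =
              \sum_l rho_n n ci mi l * (r2 l - tv).
      rewrite [RHS](bigID (fun l => anc ci l)) /= [X in _ + X]big1 ?addr0 // => l al.
      case: (eqVneq (rho_n n ci mi l) 0) => [->|h]; first by rewrite mul0r.
      by have := rho_supp hci h; rewrite (negbTE al) andbF.
    under eq_bigr do rewrite mulrBr.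
    rewrite sumrB (rho_r2 hci hv) -mulr_suml rho_sum mul1r subr_ge0.
    have eds : d = s by rewrite -(kid_par wf cd) ec (kid_par wf ci_s).
    move: hb; rewrite /beta -eds (negbTE nlead) -ec htau lee_fin //.
  case: (boolP (anc ci c)) => aci.
    exact: (IH _ _ _ hci hv d c tv nld nlead cd aci nc htau).
  rewrite big1 ?lexx // => l acl.
  case: (eqVneq (rho_n n ci mi l) 0) => [->|h]; first by rewrite mul0r.
  have /andP [_ acil] := rho_supp hci h.
  case/orP: (anc_comp acl acil) => a2; last by rewrite a2 in aci.
  exfalso; have h1' := anc_strict asc ncs; have h2' := anc_dep a2.
  rewrite (dep_kid wf ci_s) in h2'.
  have edep : dep c = dep ci by rewrite (dep_kid wf ci_s); apply/eqP; rewrite eqn_leq h2' h1'.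
  by move: nc; rewrite (anc_dep_eq a2 edep) eqxx.
have e : \sum_(l | anc c l) rho_n n.+1 s mu l * (r2 l - tv) =
   t * \sum_(l | anc c l) rho_n n c1 m1 l * (r2 l - tv) +
   (1 - t) * \sum_(l | anc c l) rho_n n c2 m2 l * (r2 l - tv).
  rewrite /= E Es; under eq_bigr do rewrite mulrDl -!mulrA.
  by rewrite big_split /= -!mulr_sumr.
clear e; rewrite /=; under eq_bigr do rewrite mulrDl -!mulrA.
rewrite big_split /= -!mulr_sumr.
apply: addr_ge0; first exact: (part c1 m1 v1 t k1 t0 h1).
apply: (part c2 m2 v2 (1 - t) k2); first lra.
by case: h2 => [->|h]; [left; rewrite subrr|right].
Qed.



Lemma sum_const_seq (l : seq S) (k : R) : \sum_(c <- l) k = (size l)%:R * k.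
Proof.
elim: l => [|a l IH]; first by rewrite big_nil mul0r.
by rewrite big_cons IH /= -add1n natrD mulrDl mul1r.
Qed.

Lemma tau_noinf (d c : S) : tau d c != +oo%E.
Proof.
rewrite /tau; apply: (big_ind (fun e : \bar R => e != +oo%E)) => //.
by move=> x y hx hy; rewrite /Order.max; case: ifP.
Qed.

Section Cpart.
Variable mu0 u0 : R.
Hypothesis hmu0 : U root mu0 = u0%:E.

Definition rho := rho_n (fuel G) root mu0.
Definition Qf x := \sum_(l | anc x l) rho l.
Definition Wf (f : S -> R) x := \sum_(l | anc x l) rho l * f l.
Definition pi' (x c : S) : R := if Qf x == 0 then (size (kids x))%:R^-1 else Qf c / Qf x.

Lemma rho_leaf l : rho l != 0 -> is_leaf l.
Proof. by move=> h; have /andP [] := rho_supp (nhw_fuel wf root) h. Qed.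

Lemma rho_nl x : ~~ is_leaf x -> rho x = 0.
Proof. by move=> nl; apply/eqP; apply/negP => /negP h; move: nl; rewrite rho_leaf. Qed.

Lemma Q_ge0 x : 0 <= Qf x.
Proof. by apply: sumr_ge0 => l _; apply: rho_ge0. Qed.

Lemma Q_root : Qf root = 1.
Proof.
rewrite /Qf (eq_bigl xpredT) ?rho_sum // => l; exact: anc_root wf l.
Qed.

Lemma Q_split x : ~~ is_leaf x -> Qf x = \sum_(c <- kids x) Qf c.
Proof. by move=> nl; apply: (sum_anc_split wf nl); apply: rho_nl. Qed.

Lemma W_split f x : ~~ is_leaf x -> Wf f x = \sum_(c <- kids x) Wf f c.
Proof. by move=> nl; apply: (sum_anc_split wf nl); rewrite rho_nl // mul0r. Qed.

Lemma Q_kid_le x c : c \in kids x -> Qf c <= Qf x.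
Proof.
move=> cx; have nl : ~~ is_leaf x by rewrite /is_leaf; apply/eqP => e; rewrite e in cx.
rewrite (Q_split nl) (big_rem c cx) /= lerDl; apply: sumr_ge0 => *; exact: Q_ge0.
Qed.

Lemma anc_leafE x : is_leaf x -> anc x =1 pred1 x.
Proof.
move=> lf l /=; apply/idP/eqP => [/(anc_leaf lf) //|->]; exact: anc_refl wf x.
Qed.

Lemma Q_leaf x : is_leaf x -> Qf x = rho x.
Proof. by move=> lf; rewrite /Qf (big_pred1 x) //; apply: anc_leafE. Qed.

Lemma W_leaf f x : is_leaf x -> Wf f x = rho x * f x.
Proof. by move=> lf; rewrite /Wf (big_pred1 x) //; apply: anc_leafE. Qed.

Lemma W_Q0 f x : Qf x = 0 -> Wf f x = 0.
Proof.
move=> h; have z := psumr_eq0P (fun l _ => rho_ge0 _ _ _ l) h.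
by rewrite /Wf big1 // => l al; rewrite /rho z // mul0r.
Qed.

Lemma joint' : is_joint pi'.
Proof.
move=> x nl; split.
  move=> c cx; rewrite /pi'; case: ifP => _; first by rewrite invr_ge0 ler0n.
  by apply: divr_ge0; apply: Q_ge0.
case: (eqVneq (Qf x) 0) => hq.
  under eq_bigr do rewrite /pi' hq eqxx.
  rewrite sum_const_seq mulfV // pnatr_eq0; apply/eqP => e.
  by move: nl; rewrite /is_leaf; move/size0nil: e => ->.
under eq_bigr do rewrite /pi' (negbTE hq).
by rewrite -mulr_suml -Q_split // mulfV.
Qed.

Lemma reach' x : reach pi' x = Qf x.
Proof.
have h : forall n x, dep x = n -> reach pi' x = Qf x.
  elim=> [|n IH] {}x hd.
    by rewrite (dep0 hd) (reach_fix wf) eqxx Q_root.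
  have xr : x != root by apply/eqP => e; rewrite e dep_root in hd.
  rewrite (reach_fix wf) (negbTE xr) IH; last by move: hd; rewrite (dep_par wf xr); case.
  rewrite /pi'; case: ifP => [/eqP hq|hq].
    rewrite hq mul0r; apply/esym/eqP; rewrite eq_le Q_ge0 andbT -hq.
    by apply: Q_kid_le; apply: par_kid.
  by rewrite mulrC divfK // hq.
exact: h.
Qed.

Lemma exp' f x : exp_n pi' f (fuel G) x * Qf x = Wf f x.
Proof.
elim/(tree_ind wf): x => x IH.
rewrite exp_fix; case E: (kids x) => [|k ks].
  have lf : is_leaf x by rewrite /is_leaf E.
  by rewrite Q_leaf // W_leaf // mulrC.
rewrite -E; have nl : ~~ is_leaf x by rewrite /is_leaf E.
case: (eqVneq (Qf x) 0) => [hq|hq]; first by rewrite hq mulr0 W_Q0.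
rewrite W_split // mulr_suml; apply: eq_big_seq => c cs.
rewrite /pi' (negbTE hq) -IH //; field; exact: hq.
Qed.

Lemma sefce' : SEFCE pi'.
Proof.
split; first exact: joint'.
move=> d c nl nlead cd; rewrite reach' => hpos.
have hQd : Qf d != 0 by apply/eqP => e; move: hpos; rewrite e mul0r ltxx.
have hQc : 0 < Qf c.
  by move: hpos; rewrite /pi' (negbTE hQd) mulrC divfK.
rewrite /follower_payoff_from.
have := tau_noinf d c; case Et: (tau d c) => [tv| |] // _; last by rewrite leNye.
rewrite lee_fin -(ler_pM2r hQc) exp' /Wf.
have := rho_tau (nhw_fuel wf root) hmu0 nl nlead cd (anc_root wf c) (kid_neq_root wf cd) Et.
rewrite -/rho; under eq_bigr do rewrite mulrBr.
by rewrite sumrB -mulr_suml subr_ge0 mulrC.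
Qed.

Lemma R1' : R1 (G:=G) pi' = R1_induced sel mu0.
Proof.
rewrite /R1 -[LHS]mulr1 -Q_root exp' /Wf /R1_induced -rho_pay.
by apply: eq_bigl => l; rewrite anc_root.
Qed.
End Cpart.

Lemma main_bound mu0 (pistar : S -> S -> R) : (forall mu, (U root mu <= U root mu0)%E) -> optimal_SEFCE pistar ->
  `|R1_induced sel mu0 - R1 pistar| <= 2%:R * (depth G)%:R * eps.
Proof.
move=> hmax [sp opt]; have e0 := eps_ge0.
have [u0 hu0] : exists u0, U root mu0 = u0%:E.
  case: (U_fin_ex root) => mu1 [a ha]; have := hmax mu1; rewrite ha.
  have := U_noinf root mu0; case: (U root mu0) => [u| |] //; by exists u.
have hA := ind_bound (nhw_fuel wf root) hu0.
have hr : 0 < reach pistar root by rewrite (reach_fix wf) eqxx ltr01.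
have [u [hu hle]] := sefce_bound sp hr.
have uu0 : u <= u0 by have := hmax (exp_n pistar (@r2 _ G) (fuel G) root); rewrite hu hu0 lee_fin.
have hC := opt _ (sefce' hu0); rewrite R1' in hC.
move: hA; rewrite /R1_induced /Hgt -/(depth G) ler_norml => /andP [a1 a2].
rewrite /R1 /R1_induced in hC *; rewrite /Hgt -/(depth G) in hle.
rewrite ler_norml; apply/andP; split; lra.
Qed.

End Main.

Theorem theorem3 :
  exists C : nat, forall (R : realType) (G : game R)
    (U : St G -> R -> \bar R) (eps : R)
    (sel : St G -> R -> (St G * St G * R * R * R)%type) (mu0 : R)
    (pistar : St G -> St G -> R),
    wf_game G ->
    learned U ->
    (forall s, loss_le (U s) (target U s) eps) ->
    induced_sel U sel ->
    (forall mu, (U (groot G) mu <= U (groot G) mu0)%E) ->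
    optimal_SEFCE pistar ->
    `|R1_induced sel mu0 - R1 pistar| <= C%:R * (depth G)%:R * eps.
Proof.
exists 2%N => R G U eps sel mu0 pistar wf lrn loss isel hmax opt.
exact: (main_bound wf lrn loss isel hmax opt).
Qed.
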